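(* Let $\mathcal B$ be the category with one object whose only endomorphisms are the identity $i$ and an idempotent $e\ne i$ (so $e\circ e=i\circ e=e\circ i=e$). Let $\mathcal E$ have objects $\mathbb N\cup\{\infty\}$ (with the usual order and $\infty$ largest) and hom-sets $\mathcal E(X,Y)=\{i,e\}$ if $X\le Y$, $\mathcal E(X,Y)=\{e\}$ if $Y<X<\infty$, $\mathcal E(X,Y)=\varnothing$ if $X=\infty$ and $Y<\infty$, with composition as in $\mathcal B$, and let $|\text{-}|:\mathcal E\to\mathcal B$ be the identity on morphisms. Then $\mathcal E$ is a concrete category over $\mathcal B$, and the $\mathcal Q_{\mathcal B}$-category $\overline{\mathcal E}$ is tensored and order-complete but not conically cocomplete.
   Context: For a concrete category (faithful functor $|\text{-}|:\mathcal E\to\mathcal B$), $\overline{\mathcal E}(X,Y)$ is the set of maps $|X|\to|Y|$ of the form $|f'|$, $f':X\to Y$. For subsets $\mathbf f\subseteq\mathcal B(S,T)$, $\mathbf h\subseteq\mathcal B(S,U)$ put $\mathbf h\swarrow\mathbf f=\{g\mid\forall f\in\mathbf f: g\circ f\in\mathbf h\}$. $\overline{\mathcal E}$ is tensored if for every $X$ and every subset $\mathbf u\subseteq\mathcal B(|X|,T)$ there is $Y$ with $|Y|=T$ and $\overline{\mathcal E}(Y,Z)=\overline{\mathcal E}(X,Z)\swarrow\mathbf u$ for all $Z$. The fibre $\mathcal E_T$ is the class of $Y$ with $|Y|=T$ preordered by $Y\le Y'$ iff $1_T\in\overline{\mathcal E}(Y,Y')$; $\overline{\mathcal E}$ is order-complete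 if every fibre has joins of all subclasses. A presheaf of extent $T$ is a family $\varphi_X\subseteq\mathcal B(|X|,T)$ with $\varphi_X\circ\overline{\mathcal E}(X',X)\subseteq\varphi_{X'}$; a supremum is $Y$ with $|Y|=T$ and $\overline{\mathcal E}(Y,Z)=\bigcap_X\overline{\mathcal E}(X,Z)\swarrow\varphi_X$ for all $Z$; $\overline{\mathcal E}$ is conically cocomplete if for every family $(Y_i)$ in a fibre $\mathcal E_T$ the presheaf $X\mapsto\bigcup_i\overline{\mathcal E}(X,Y_i)$ has a supremum. *)

(* Defs.v *)
From Stdlib Require Import Arith.
Set Implicit Arguments.
Unset Strict Implicit.

Inductive Bmor : Type := Bi | Be.

(* Bcomp g f = g o f *)
Definition Bcomp (g f : Bmor) : Bmor :=
  match g, f with Bi, Bi => Bi | _, _ => Be end.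

(* ---- The category E: objects N u {oo} (None = oo). ---- *)
Definition Eobj : Type := option nat.

Definition Ele (X Y : Eobj) : Prop :=
  match X, Y with
  | _, None => True
  | None, Some _ => False
  | Some a, Some b => a <= b
  end.

(* E(X,Y) viewed as a subset of B(*,*) (|-| is the identity on morphisms,
   hence faithful). *)
Definition Ehom (X Y : Eobj) (m : Bmor) : Prop :=
  match m with
  | Bi => Ele X Y
  | Be => match X, Y with None, Some _ => False | _, _ => True end
  end.

(* ---- Generic notions for a concrete category over a one-object base
   category with endomorphism type M, composition comp, identity id;
   hom X Y is the image set  Ebar(X,Y) = { |f'| : f' : X -> Y }. ---- *)
Section Generic.
Variables (Obj M : Type) (comp : M -> M -> M) (id : M)
          (hom : Obj -> Obj -> M -> Prop).

Definition is_concrete_over_one_object : Prop :=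
  (forall a b c, comp a (comp b c) = comp (comp a b) c) /\
  (forall a, comp id a = a /\ comp a id = a) /\
  (forall X, hom X X id) /\
  (forall X Y Z f g, hom X Y f -> hom Y Z g -> hom X Z (comp g f)).

Definition Ebar (X Y : Obj) : M -> Prop := hom X Y.

Definition swarrow (h f : M -> Prop) : M -> Prop :=
  fun g => forall f0, f f0 -> h (comp g f0).

Definition set_eq (A B : M -> Prop) : Prop := forall g, A g <-> B g.

(* All objects lie over the unique object of the base, so |Y| = T is automatic. *)
Definition tensored : Prop :=
  forall (X : Obj) (u : M -> Prop), exists Y : Obj,
    forall Z, set_eq (Ebar Y Z) (swarrow (Ebar X Z) u).

Definition fibre_le (Y Y' : Obj) : Prop := Ebar Y Y' id.

Definition order_complete : Prop :=
  forall P : Obj -> Prop, exists J : Obj,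
    (forall Y, P Y -> fibre_le Y J) /\
    (forall K, (forall Y, P Y -> fibre_le Y K) -> fibre_le J K).

Definition is_presheaf (phi : Obj -> M -> Prop) : Prop :=
  forall X X' g f, phi X g -> Ebar X' X f -> phi X' (comp g f).

Definition is_supremum (phi : Obj -> M -> Prop) (Y : Obj) : Prop :=
  forall Z, set_eq (Ebar Y Z) (fun g => forall X, swarrow (Ebar X Z) (phi X) g).

Definition union_presheaf (I : Type) (Ys : I -> Obj) : Obj -> M -> Prop :=
  fun X g => exists i, Ebar X (Ys i) g.

Definition conically_cocomplete : Prop :=
  forall (I : Type) (Ys : I -> Obj), exists Y, is_supremum (union_presheaf Ys) Y.

End Generic.

(* Main.v *)
Require Import Defs.
From Stdlib Require Import Arith Lia Classical.

Lemma bounded_sup (P : nat -> Prop) (b : nat) :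
  (forall n, P n -> n <= b) ->
  exists m, (forall n, P n -> n <= m) /\
            (forall k, (forall n, P n -> n <= k) -> m <= k).
Proof.
  induction b as [|b IH]; intros Hb.
  - exists 0. split; [exact Hb|]. intros; lia.
  - destruct (classic (forall n, P n -> n <= b)) as [H|H].
    + exact (IH H).
    + apply not_all_ex_not in H. destruct H as [n Hn].
      assert (P n /\ ~ n <= b) as [Pn Hnb] by tauto.
      assert (n = S b) by (specialize (Hb n Pn); lia). subst n.
      exists (S b). split; [exact Hb|]. intros k Hk. apply Hk, Pn.
Qed.

Theorem mainTheorem6 :
  is_concrete_over_one_object Bcomp Bi Ehom /\
  tensored Bcomp Ehom /\
  order_complete Bi Ehom /\
  ~ conically_cocomplete Bcomp Ehom.
Proof.
  split; [|split; [|split]].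
  - split; [|split; [|split]].
    + intros [] [] []; reflexivity.
    + intros []; split; reflexivity.
    + intros [x|]; simpl; auto.
    + intros [x|] [y|] [z|] [] []; simpl; intros; try lia; tauto.
  - intros X u.
    destruct (classic (u Bi)) as [Hi|Hi]; destruct (classic (u Be)) as [He|He].
    + exists X. intros Z g; unfold Ebar, swarrow; split.
      * intros Hg f0 _. destruct X as [x|], Z as [z|], g, f0; simpl in *; auto.
      * intros H. specialize (H Bi Hi). destruct g; exact H.
    + exists X. intros Z g; unfold Ebar, swarrow; split.
      * intros Hg f0 Hf0. destruct f0; [destruct g; exact Hg|contradiction].
      * intros H. specialize (H Bi Hi). destruct g; exact H.
    + destruct X as [x|].
      * exists (Some 0). intros Z g; unfold Ebar, swarrow; split.
        -- intros _ f0 Hf0. destruct f0; [contradiction|]. destruct g, Z; simpl; auto.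
        -- intros _. destruct g, Z; simpl; auto; lia.
      * exists None. intros Z g; unfold Ebar, swarrow; split.
        -- intros Hg f0 Hf0. destruct Z; [destruct g; simpl in Hg; contradiction|].
           destruct g, f0; simpl; auto.
        -- intros H. specialize (H Be He). destruct g, Z; simpl in *; auto.
    + exists (Some 0). intros Z g; unfold Ebar, swarrow; split.
      * intros _ f0 Hf0. destruct f0; contradiction.
      * intros _. destruct g, Z; simpl; auto; lia.
  - intros P. unfold fibre_le, Ebar.
    destruct (classic (exists b, forall Y, P Y -> Ele Y (Some b))) as [[b Hb]|Hn].
    + destruct (bounded_sup (fun n => P (Some n)) b) as [m [Hm1 Hm2]].
      { intros n Pn. exact (Hb _ Pn). }
      exists (Some m). split.
      * intros [y|] Py; simpl.
        -- apply Hm1, Py.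
        -- exact (Hb _ Py).
      * intros [k|] Hk; simpl; auto.
        apply Hm2. intros n Pn. exact (Hk _ Pn).
    + exists None. split.
      * intros [y|] _; simpl; auto.
      * intros [k|] Hk; simpl; auto. exfalso. apply Hn. exists k. exact Hk.
  - intros H. destruct (H nat (fun n => Some n)) as [Y HY].
    unfold is_supremum, set_eq, Ebar, swarrow, union_presheaf in HY.
    destruct Y as [n|].
    + destruct (HY (Some n) Bi) as [H1 _].
      assert (Hr := H1 (le_n n) (Some (S n)) Bi (ex_intro _ (S n) (le_n _))).
      simpl in Hr. lia.
    + destruct (HY (Some 0) Be) as [_ H2]. apply H2.
      intros X f0 [i Hi]. destruct X, f0; simpl in *; auto.
Qed.
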